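(* Let $K_1,K_{-1}\subseteq[N]$ be disjoint, $x_{\pm}=\mathbb{1}_{K_1}-\mathbb{1}_{K_{-1}}$, and let $A\in\mathbb{R}^{m\times N}$ satisfy the robust bipolar ternary null space property with constants $0<\rho<1$, $\tau>0$ relative to $K_{-1},K_1$. Let $b=Ax_\pm+e$ with $\|e\|_2\le\eta$. Then every solution $\hat z$ of $\min\|z\|_1$ subject to $\|Az-b\|_2\le\eta$ and $z\in[-1,1]^N$ satisfies $\|\hat z-x_\pm\|_1\le\frac{4\tau}{1-\rho}\eta$.
   Context: $\mathbb{1}_S$ has entries $1$ on $S$, $0$ elsewhere; $K=K_1\cup K_{-1}$, $K^C=[N]\setminus K$. $H_{K_1,K_{-1}}=\{w\in\mathbb{R}^N: w_i\le0\text{ for } i\in K_1,\ w_i\ge0 \text{ for } i\in K_{-1}\}$. $A$ satisfies the robust bipolar ternary null space property with constants $\rho,\tau$ relative to $K_{-1},K_1$ if $\sum_{i\in K_{-1}}v_i-\sum_{i\in K_1}v_i\le\rho\sum_{i\in K^C}|v_i|+\tau\|Av\|_2$ for every $v\in H_{K_1,K_{-1}}$. *)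

(* Defs.v *)
From mathcomp Require Import all_boot all_order all_algebra.
From mathcomp Require Import reals.
Set Implicit Arguments. Unset Strict Implicit. Unset Printing Implicit Defensive.
Import Order.TTheory GRing.Theory Num.Theory.
Local Open Scope ring_scope.

Definition norm1 (R : realType) (n : nat) (v : 'cV[R]_n) : R :=
  \sum_(i < n) `|v i 0|.
Definition norm2 (R : realType) (n : nat) (v : 'cV[R]_n) : R :=
  Num.sqrt (\sum_(i < n) (v i 0) ^+ 2).

Definition indic (R : realType) (n : nat) (S : {set 'I_n}) : 'cV[R]_n :=
  \col_(i < n) (if i \in S then 1 else 0).

Definition in_H (R : realType) (n : nat) (K1 Km1 : {set 'I_n}) (w : 'cV[R]_n) : Prop :=
  (forall i, i \in K1 -> w i 0 <= 0) /\ (forall i, i \in Km1 -> 0 <= w i 0).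

Definition robust_bipolar_ternary_NSP (R : realType) (m n : nat) (A : 'M[R]_(m, n))
    (rho tau : R) (Km1 K1 : {set 'I_n}) : Prop :=
  forall v : 'cV[R]_n, in_H K1 Km1 v ->
    \sum_(i in Km1) v i 0 - \sum_(i in K1) v i 0
      <= rho * \sum_(i in ~: (K1 :|: Km1)) `|v i 0| + tau * norm2 (A *m v).

Definition feasible (R : realType) (m n : nat) (A : 'M[R]_(m, n)) (b : 'cV[R]_m)
    (eta : R) (z : 'cV[R]_n) : Prop :=
  norm2 (A *m z - b) <= eta /\ (forall i, -1 <= z i 0 <= 1).

(* Main.v *)
Require Import Defs.
From mathcomp Require Import all_boot all_order all_algebra.
From mathcomp Require Import reals.
From mathcomp Require Import ring lra.
Import Order.TTheory GRing.Theory Num.Theory.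
Local Open Scope ring_scope.

Lemma cs_sum (R : realType) (n : nat) (u w : 'cV[R]_n) :
  \sum_i u i 0 * w i 0 <= norm2 u * norm2 w.
Proof.
set a := norm2 u; set c := norm2 w.
have a0 : 0 <= a by apply: sqrtr_ge0.
have c0 : 0 <= c by apply: sqrtr_ge0.
have a2 : a ^+ 2 = \sum_i u i 0 ^+ 2 by rewrite sqr_sqrtr // sumr_ge0 // => i _; apply: sqr_ge0.
have c2 : c ^+ 2 = \sum_i w i 0 ^+ 2 by rewrite sqr_sqrtr // sumr_ge0 // => i _; apply: sqr_ge0.
have H : 0 <= \sum_i (c * u i 0 - a * w i 0) ^+ 2 by rewrite sumr_ge0 // => i _; apply: sqr_ge0.
have E : \sum_i (c * u i 0 - a * w i 0) ^+ 2 =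
   c ^+ 2 * \sum_i u i 0 ^+ 2 - (2 * c * a) * \sum_i (u i 0 * w i 0) + a ^+ 2 * \sum_i w i 0 ^+ 2.
  transitivity (\sum_i ((c ^+ 2 * u i 0 ^+ 2 - 2 * c * a * (u i 0 * w i 0)) + a ^+ 2 * w i 0 ^+ 2)).
    by apply: eq_bigr => i _; ring.
  by rewrite big_split sumrB /= !mulr_sumr.
rewrite E -a2 -c2 in H.
have := mulr_ge0 a0 c0; rewrite le_eqVlt => /orP [/eqP ac0 | acp]; last by nra.
have zero : forall (v : 'cV[R]_n), norm2 v = 0 -> forall i, v i 0 = 0.
  move=> v hv i; apply/eqP; rewrite -sqrf_eq0; apply/eqP.
  have hv2 : \sum_i v i 0 ^+ 2 = 0.
    by rewrite -(sqr_sqrtr (a := \sum_i v i 0 ^+ 2)) ?sumr_ge0 // -/(norm2 v) ?hv ?expr0n // => j _; apply: sqr_ge0.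
  by apply: (psumr_eq0P _ hv2) => // j _; apply: sqr_ge0.
move/eqP: (ac0); rewrite eq_sym mulf_eq0 => /orP [/eqP ha | /eqP hc].
- rewrite big1; first by rewrite -ac0. by move=> i _; rewrite (zero u ha) mul0r.
- rewrite big1; first by rewrite -ac0. by move=> i _; rewrite (zero w hc) mulr0.
Qed.

Lemma norm2N (R : realType) (n : nat) (u : 'cV[R]_n) : norm2 (- u) = norm2 u.
Proof. by rewrite /norm2; congr Num.sqrt; apply: eq_bigr => i _; rewrite mxE sqrrN. Qed.

Lemma norm2_ge0 (R : realType) (n : nat) (u : 'cV[R]_n) : 0 <= norm2 u.
Proof. exact: sqrtr_ge0. Qed.

Lemma norm2D (R : realType) (n : nat) (u w : 'cV[R]_n) :
  norm2 (u + w) <= norm2 u + norm2 w.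
Proof.
have a0 := @norm2_ge0 _ _ u; have c0 := @norm2_ge0 _ _ w.
have a2 : norm2 u ^+ 2 = \sum_i u i 0 ^+ 2 by rewrite sqr_sqrtr // sumr_ge0 // => i _; apply: sqr_ge0.
have c2 : norm2 w ^+ 2 = \sum_i w i 0 ^+ 2 by rewrite sqr_sqrtr // sumr_ge0 // => i _; apply: sqr_ge0.
have cs := @cs_sum _ _ u w.
rewrite {1}/norm2 -(ger0_norm (addr_ge0 a0 c0)) -sqrtr_sqr ler_sqrt; last exact: sqr_ge0.
have -> : \sum_i (u + w) i 0 ^+ 2 = \sum_i u i 0 ^+ 2 + 2 * \sum_i u i 0 * w i 0 + \sum_i w i 0 ^+ 2.
  transitivity (\sum_i ((u i 0 ^+ 2 + 2 * (u i 0 * w i 0)) + w i 0 ^+ 2)).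
    by apply: eq_bigr => i _; rewrite mxE; ring.
  by rewrite big_split big_split /= mulr_sumr.
rewrite -a2 -c2; nra.
Qed.

Theorem theorem3p6 (R : realType) (m N : nat) (K1 Km1 : {set 'I_N})
    (A : 'M[R]_(m, N)) (rho tau eta : R) (e : 'cV[R]_m) (zhat : 'cV[R]_N) :
  [disjoint K1 & Km1] ->
  0 < rho -> rho < 1 -> 0 < tau ->
  robust_bipolar_ternary_NSP A rho tau Km1 K1 ->
  norm2 e <= eta ->
  let xpm := indic R K1 - indic R Km1 in
  let b := A *m xpm + e in
  feasible A b eta zhat ->
  (forall z, feasible A b eta z -> norm1 zhat <= norm1 z) ->
  norm1 (zhat - xpm) <= 4 * tau / (1 - rho) * eta.
Proof.
move=> D rho0 rho1 tau0 NSP he xpm b [fz zb] opt.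
set v := zhat - xpm.
have disj : forall i, i \in K1 -> (i \in Km1) = false.
  move=> i h; apply/negP => h2; move/disjoint_setI0: D => /setP/(_ i).
  by rewrite !inE h h2.
have disj' : forall i, i \in Km1 -> (i \in K1) = false.
  by move=> i h; apply/negP => h2; rewrite disj in h.
have split3 : forall F : 'I_N -> R, \sum_i F i =
    \sum_(i in K1) F i + \sum_(i in Km1) F i + \sum_(i in ~: (K1 :|: Km1)) F i.
  move=> F; rewrite (bigID (mem K1)) /= (bigID (mem Km1) (fun i => ~~ (i \in K1))) /= addrA.
  congr (_ + _ + _); apply: eq_bigl => i.
    by case: (boolP (i \in Km1)) => h; [rewrite disj' | rewrite andbF].
  by rewrite !inE negb_or.
have xe : forall i, xpm i 0 = (if i \in K1 then 1 else 0) - (if i \in Km1 then 1 else 0).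
  by move=> i; rewrite !mxE.
have ve : forall i, v i 0 = zhat i 0 - xpm i 0.
  by move=> i; rewrite /v !mxE.
have vK1 : forall i, i \in K1 -> v i 0 = zhat i 0 - 1.
  by move=> i h; rewrite ve xe h disj // subr0.
have vKm1 : forall i, i \in Km1 -> v i 0 = zhat i 0 + 1.
  by move=> i h; rewrite ve xe h disj' // sub0r opprK.
have vC : forall i, i \in ~: (K1 :|: Km1) -> v i 0 = zhat i 0.
  move=> i; rewrite !inE negb_or => /andP [h1 h2].
  by rewrite ve xe (negbTE h1) (negbTE h2) subrr subr0.
have HH : in_H K1 Km1 v.
  split=> i h; [rewrite vK1 // | rewrite vKm1 //]; move: (zb i) => /andP [z1 z2]; lra.
have fx : feasible A b eta xpm.
  split; last first.
    by move=> i; rewrite xe; case: (i \in K1); case: (i \in Km1); rewrite /=; lra.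
  by rewrite /b opprD addrA subrr add0r norm2N.
have ox := opt _ fx.
set S := \sum_(i in ~: (K1 :|: Km1)) `|v i 0|.
set T := \sum_(i in Km1) v i 0 - \sum_(i in K1) v i 0.
have nx : norm1 xpm = \sum_(i in K1) (1 : R) + \sum_(i in Km1) (1 : R) + 0.
  rewrite /norm1 split3; congr (_ + _ + _).
  - by apply: eq_bigr => i h; rewrite xe h disj // subr0 normr1.
  - by apply: eq_bigr => i h; rewrite xe h disj' // sub0r normrN normr1.
  - apply: big1 => i; rewrite !inE negb_or => /andP [h1 h2].
    by rewrite xe (negbTE h1) (negbTE h2) subrr normr0.
have nz : \sum_(i in K1) (1 + v i 0) + \sum_(i in Km1) (1 - v i 0) + S <= norm1 zhat.
  rewrite /norm1 split3; apply: lerD; first apply: lerD.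
  - apply: ler_sum => i h; rewrite vK1 //; have := ler_norm (zhat i 0); lra.
  - apply: ler_sum => i h; rewrite vKm1 //; have := ler_norm (- zhat i 0); rewrite normrN; lra.
  - by rewrite le_eqVlt; apply/orP; left; apply/eqP; apply: eq_bigr => i h; rewrite vC.
rewrite big_split sumrB /= in nz.
have ST : S <= T by rewrite /T; lra.
have nv : norm1 v = T + S.
  rewrite /norm1 split3 /T /S; congr (_ + _).
  have -> : \sum_(i in K1) `|v i 0| = - \sum_(i in K1) v i 0.
    rewrite -sumrN; apply: eq_bigr => i h; apply: ler0_norm; exact: HH.1.
  have -> : \sum_(i in Km1) `|v i 0| = \sum_(i in Km1) v i 0.
    apply: eq_bigr => i h; apply: ger0_norm; exact: HH.2.
  by rewrite addrC.
have Av : norm2 (A *m v) <= eta + eta.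
  have -> : A *m v = (A *m zhat - b) + e.
    by rewrite /v mulmxBr /b opprD addrA addrNK.
  by apply: (le_trans (norm2D _ _ _ _)); apply: lerD.
have ns := NSP v HH.
rewrite -/S in ns.
have h1 : rho * S <= rho * T by apply: ler_wpM2l => //; apply: ltW.
have h2 : tau * norm2 (A *m v) <= tau * (eta + eta) by apply: ler_wpM2l => //; apply: ltW.
have h3 : (1 - rho) * S <= (1 - rho) * T by apply: ler_wpM2l => //; lra.
rewrite nv mulrAC ler_pdivlMr; last by lra.
rewrite /T in h1 h3 ST *; lra.
Qed.
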